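(* Let $\mathbf{M}$ be any many-valued logic and let $A_1,\ldots,A_n$ be formulas that are not tautologies of $\mathbf{M}$. Then there is a finite-valued logic $\mathbf{M}'$ over the same language such that (1) none of $A_1,\ldots,A_n$ is a tautology of $\mathbf{M}'$; (2) $\mathrm{Taut}(\mathbf{M})\subseteq\mathrm{Taut}(\mathbf{M}')$; and (3) $|V(\mathbf{M}')| \le \prod_{i=1}^n \xi(A_i)$, where $\xi(A_i)$ is the number of subformulas of $A_i$ plus $1$.
   Context: A propositional language consists of variables $X_1,X_2,\ldots$ and finitely many connectives with given arities (0-ary ones are constants). A many-valued logic $\mathbf{M}$ is given by a set $V(\mathbf{M})$ of truth values, a subset $V^+(\mathbf{M})$ of designated values, and for each $n$-ary connective $\Box$ a truth function $\widetilde{\Box}\colon V(\mathbf{M})^n\to V(\mathbf{M})$; it is finite-valued if $V(\mathbf{M})$ is finite. A valuation assigns truth values to variables and extends to all formulas via the truth functions. A formula is a tautology of $\mathbf{M}$ if it receives a designated value under every valuation; $\mathrm{Taut}(\mathbf{M})$ denotes the set of tautologies. *)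

(* Defs.v *)
From Stdlib Require Import List.
From mathcomp Require Import all_boot.
Set Implicit Arguments. Unset Strict Implicit. Unset Printing Implicit Defensive.

Record language := Language {
  conn : finType;
  arity : conn -> nat }.

Inductive formula (L : language) : Type :=
| Var : nat -> formula L
| App : forall c : conn L, {ffun 'I_(arity c) -> formula L} -> formula L.

Inductive subformula (L : language) : formula L -> formula L -> Prop :=
| sub_refl A : subformula A A
| sub_app B (c : conn L) (args : {ffun 'I_(arity c) -> formula L}) (i : 'I_(arity c)) :
    subformula B (args i) -> subformula B (App args).

Definition nsub (L : language) (A : formula L) (k : nat) : Prop :=
  exists l : list (formula L),
    NoDup l /\ (forall B, In B l <-> subformula B A) /\ length l = k.

Record logic (L : language) := Logic {
  tv : Type;
  designated : tv -> Prop;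
  truthfun : forall c : conn L, ('I_(arity c) -> tv) -> tv }.

Fixpoint eval (L : language) (M : logic L) (v : nat -> tv M) (A : formula L) : tv M :=
  match A with
  | Var n => v n
  | App c args => @truthfun L M c (fun i => eval v (args i))
  end.

Definition tautology (L : language) (M : logic L) (A : formula L) : Prop :=
  forall v : nat -> tv M, @designated L M (eval v A).

(* Main.v *)
Require Import Defs.
From mathcomp Require Import all_boot.
From Stdlib Require Import List ClassicalEpsilon FunctionalExtensionality Classical.
Set Implicit Arguments. Unset Strict Implicit.

Lemma cardT n (k : 'I_n -> nat) :
  #|{: {dffun forall i : 'I_n, option 'I_(k i)}}| = \prod_(i < n) (k i).+1.
Proof.
rewrite card_dep_ffun.
have H : forall (f : 'I_n -> nat) s, foldr muln 1 (map f s) = \prod_(x <- s) f x.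
  by move=> f; elim=> [|a s IH]; rewrite ?big_nil ?big_cons //= IH.
rewrite /image_mem H big_enum /=.
by apply: eq_bigr => i _; rewrite card_option card_ord.
Qed.

Fixpoint formula_ind' (L : language) (P : formula L -> Prop)
  (HV : forall m, P (Var L m))
  (HA : forall c (args : {ffun 'I_(arity c) -> formula L}),
          (forall t, P (args t)) -> P (App args))
  (A : formula L) : P A :=
  match A with
  | Var m => HV m
  | App c args => HA c args (fun t => formula_ind' HV HA (args t))
  end.

Definition sel (m : nat) (P : 'I_m -> Prop) : option 'I_m :=
  match excluded_middle_informative (exists j, P j) with
  | left h => Some (proj1_sig (constructive_indefinite_description _ h))
  | right _ => None
  end.

Lemma selS m (P : 'I_m -> Prop) j : sel P = Some j -> P j.
Proof.
rewrite /sel; case: excluded_middle_informative => // h [<-].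
exact: proj2_sig (constructive_indefinite_description _ h).
Qed.

Lemma selE m (P : 'I_m -> Prop) : (exists j, P j) -> exists j, sel P = Some j /\ P j.
Proof.
move=> h; case E: (sel P) => [j|]; first by exists j; split => //; exact: selS.
move: E; rewrite /sel; case: excluded_middle_informative => //.
Qed.

Section Comp.
Definition iota (L : language) (M : logic L) (v : nat -> tv M) (l : list (formula L))
  (k : nat) (j : 'I_k) : tv M := eval v (List.nth j l (Var L 0)).

Definition iopt (L : language) (M : logic L) (v : nat -> tv M) (l : list (formula L))
  (k : nat) (x : option 'I_k) : tv M :=
  match x with Some j => iota v l j | None => v 0 end.

Definition Fc (L : language) (M : logic L) (v : nat -> tv M) (l : list (formula L))
  (k : nat) (c : conn L) (a : 'I_(arity c) -> option 'I_k) : option 'I_k :=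
  match excluded_middle_informative (forall t, a t <> None) with
  | left _ => sel (fun j => iota v l j = @truthfun _ M c (fun t => iopt v l (a t)))
  | right _ => None
  end.

Definition Dc (L : language) (M : logic L) (v : nat -> tv M) (l : list (formula L))
  (k : nat) (x : option 'I_k) : Prop :=
  match x with Some j => designated (iota v l j) | None => True end.

Definition Mc (L : language) (M : logic L) (v : nat -> tv M) (l : list (formula L))
  (k : nat) : logic L := @Logic L (option 'I_k) (@Dc L M v l k) (@Fc L M v l k).
End Comp.

Lemma comp_taut (L : language) (M : logic L) v l k B :
  tautology M B -> tautology (@Mc L M v l k) B.
Proof.
move=> HB w.
set u := fun m => iopt v l (w m).
have key : forall B, @eval L (Mc v l k) w B = None \/
   exists j, @eval L (Mc v l k) w B = Some j /\ iota v l j = eval u B.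
  elim/formula_ind' => [m|c args IH].
    rewrite /= /u; case: (w m) => [j|]; [right; by exists j|by left].
  rewrite /= /Fc /=; case: excluded_middle_informative => [h|]; last by left.
  case E: (sel _) => [j|]; last by left.
  right; exists j; split => //; rewrite (selS E); congr truthfun.
  apply: functional_extensionality => t.
  case: (IH t) => [/h //|[j' [-> <-]]] //.
case: (key B) => [-> //|[j [-> e]]]; rewrite /= e; exact: HB.
Qed.

Lemma sub_trans (L : language) (A B C : formula L) :
  subformula A B -> subformula B C -> subformula A C.
Proof. move=> h1 h2; elim: h2 h1 => // ? c args i _ IH h; exact: sub_app (IH h). Qed.

Lemma comp_fals (L : language) (M : logic L) (v : nat -> tv M) l k A :
  (forall B, List.In B l <-> subformula B A) -> length l = k ->
  ~ designated (eval v A) ->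
  exists w, ~ @designated L (Mc v l k) (@eval L (Mc v l k) w A).
Proof.
move=> Hl Hk Hd.
have idx : forall B, subformula B A -> exists j : 'I_k, List.nth j l (Var L 0) = B.
  move=> B /Hl /(In_nth _ _ (Var L 0)) [j [lt e]].
  have lt' : (j < k)%N by apply/ltP; rewrite -Hk.
  by exists (Ordinal lt').
pose w m := sel (fun j : 'I_k => List.nth j l (Var L 0) = Var L m).
exists w.
have key : forall B, subformula B A ->
   exists j, @eval L (Mc v l k) w B = Some j /\ iota v l j = eval v B.
  elim/formula_ind' => [m|c args IH] hs.
    have [j [E P]] := selE (idx _ hs).
    by exists j; rewrite /= /w E /iota P.
  have IH' : forall t, exists j, @eval L (Mc v l k) w (args t) = Some j /\
                        iota v l j = eval v (args t).
    move=> t; apply: IH; apply: (sub_trans _ hs); eapply sub_app; eapply Defs.sub_refl.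
  rewrite /= /Fc /=; case: excluded_middle_informative => [h|h]; last first.
    by exfalso; apply: h => t; case: (IH' t) => j [-> _].
  have feq : (fun t => iopt v l (@eval L (Mc v l k) w (args t))) =
             (fun t => eval v (args t)).
    apply: functional_extensionality => t; by case: (IH' t) => j [-> <-].
  rewrite feq.
  have [j0 e0] := idx _ hs.
  have ex : exists j : 'I_k, iota v l j = @truthfun _ M c (fun t => eval v (args t)).
    by exists j0; rewrite /iota e0.
  have [j [E P]] := selE ex.
  by exists j; split.
have [j [E P]] := key A (Defs.sub_refl _).
by rewrite E /= P.
Qed.

Theorem proposition2 (L : language) (M : logic L) (n : nat)
    (A : 'I_n -> formula L) (k : 'I_n -> nat) :
  (forall i, ~ tautology M (A i)) ->
  (forall i, nsub (A i) (k i)) ->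
  exists (V' : finType) (D' : V' -> Prop)
         (F' : forall c : conn L, ('I_(arity c) -> V') -> V'),
    let M' := @Logic L V' D' F' in
    (forall i, ~ tautology M' (A i)) /\
    (forall B, tautology M B -> tautology M' B) /\
    #|V'| <= \prod_(i < n) (k i).+1.
Proof.
move=> Hnt Hns.
have Hv : forall i, exists v : nat -> tv M, ~ designated (eval v (A i)).
  move=> i; exact: (not_all_ex_not _ (fun v => @designated _ M (eval v (A i))) (Hnt i)).
pose v i := proj1_sig (constructive_indefinite_description _ (Hv i)).
have vP : forall i, ~ designated (eval (v i) (A i)).
  move=> i; exact: proj2_sig (constructive_indefinite_description _ (Hv i)).
pose l i := proj1_sig (constructive_indefinite_description _ (Hns i)).
have lP : forall i, NoDup (l i) /\ (forall B, In B (l i) <-> subformula B (A i)) /\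
                    length (l i) = k i.
  move=> i; exact: proj2_sig (constructive_indefinite_description _ (Hns i)).
pose MC i := @Mc L M (v i) (l i) (k i).
pose V' := {dffun forall i : 'I_n, option 'I_(k i)}.
pose D' (x : V') := forall i, @Dc L M (v i) (l i) (k i) (x i).
pose F' (c : conn L) (a : 'I_(arity c) -> V') : V' :=
  [ffun i => @Fc L M (v i) (l i) (k i) c (fun t => a t i)].
exists V', D', F' => M'.
have comp : forall (w : nat -> V') B i,
    @eval L M' w B i = @eval L (MC i) (fun m => w m i) B.
  move=> w; elim/formula_ind' => [m|c args IH] i //=.
  rewrite /F' ffunE; congr Fc.
  apply: functional_extensionality => t; exact: IH.
split; [|split].
- move=> i Ht.
  have [_ [Hl Hk]] := lP i.
  have Hw : forall j, exists w, ~ @designated L (MC j) (@eval L (MC j) w (A j)).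
    move=> j; have [_ [Hl' Hk']] := lP j; exact: comp_fals Hl' Hk' (vP j).
  pose w j := proj1_sig (constructive_indefinite_description _ (Hw j)).
  pose W m : V' := [ffun j => w j m].
  apply: (proj2_sig (constructive_indefinite_description _ (Hw i))).
  have := Ht W i; rewrite comp.
  have -> : (fun m => W m i) = w i by apply: functional_extensionality => m; rewrite /W ffunE.
  by [].
- move=> B HB w i; rewrite comp; exact: (comp_taut HB).
- by rewrite cardT.
Qed.
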